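(* For every $n>0$: (1) $L_{\mathrm{RCC5}}(\mathcal{RS}^5)=L^{\mathrm S}_{\mathrm{RCC5}}(\mathcal{TOP})=L^{\mathrm S}_{\mathrm{RCC5}}(\mathbb R^n,\mathbb R^n_{\mathrm{reg}})$; (2) $L^{\mathrm{fin}}_{\mathrm{RCC5}}(\mathcal{RS}^5)=L^{\mathrm{fin}}_{\mathrm{RCC5}}(\mathcal{TOP})=L^{\mathrm{fin}}_{\mathrm{RCC5}}(\mathbb R^n,\mathbb R^n_{\mathrm{reg}})$.
   Context: Topology: interior $\mathbb I$, closure $\mathbb C$; regular closed: $\mathbb C\mathbb I(s)=s$; $\mathfrak T_{\mathrm{reg}}$ non-empty regular closed subsets; $\mathbb R^n$ Euclidean. Concrete RCC5-structure $\mathfrak R^5(\mathfrak T,U)$: domain $U$ (set of non-empty regular closed sets), relations $\mathrm{eq}$ ($s=t$), $\mathrm{po}$ ($\mathbb Is\cap\mathbb It\ne\emptyset$, $s\not\subseteq t$, $t\not\subseteq s$), $\mathrm{dr}$ ($\mathbb Is\cap\mathbb It=\emptyset$), $\mathrm{pp}$ ($s\subseteq t$, $s\ne t$), $\mathrm{ppi}$ (inverse of $\mathrm{pp}$). $\mathcal{TOP}$ here is the class of all $\mathfrak R^5(\mathfrak T,\mathfrak T_{\mathrm{reg}})$. $\mathcal{RS}^5$ is the class of general RCC5-structures: non-empty $W$ with five mutually disjoint jointly exhaustive relations $\mathrm{dr},\mathrm{eq},\mathrm{pp},\mathrm{ppi},\mathrm{po}$, $\mathrm{eq}$ identity, $\mathrm{po},\mathrm{dr}$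 symmetric, $\mathrm{pp}$ inverse of $\mathrm{ppi}$, satisfying the standard RCC5 composition table. $\mathcal L_{\mathrm{RCC5}}$: modal language with propositional variables, $\neg,\wedge$ and a box $[r]$ per RCC5 relation. $L_{\mathrm{RCC5}}(\mathcal S)$: formulas valid in all models on members of $\mathcal S$; $L^{\mathrm S}_{\mathrm{RCC5}}(\mathcal S)$: valid in all substructures of members; $L^{\mathrm{fin}}_{\mathrm{RCC5}}(\mathcal S)$: valid in all finite substructures of members. *)

(* Defs.v *)
From HB Require Import structures.
From mathcomp Require Import all_boot all_order all_algebra.
From mathcomp Require Import all_classical all_reals all_analysis.
From Stdlib Require Import List.
Import numFieldNormedType.Exports.

Set Implicit Arguments.
Unset Strict Implicit.
Unset Printing Implicit Defensive.

Local Open Scope classical_set_scope.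

Inductive rcc5 := DR | EQ | PP | PPI | PO.

Inductive form :=
| Var : nat -> form
| Neg : form -> form
| And : form -> form -> form
| Box : rcc5 -> form -> form.

Record frame := Frame {
  carrier : Type;
  frel : rcc5 -> carrier -> carrier -> Prop }.

Fixpoint sat (F : frame) (V : nat -> carrier F -> Prop) (w : carrier F) (phi : form)
  : Prop :=
  match phi with
  | Var p => V p w
  | Neg psi => ~ sat V w psi
  | And psi chi => sat V w psi /\ sat V w chi
  | Box r psi => forall v, @frel F r w v -> sat V v psi
  end.

Definition valid (F : frame) (phi : form) : Prop :=
  forall (V : nat -> carrier F -> Prop) (w : carrier F), sat V w phi.

(** The standard RCC5 composition table: possible r3 with x r1 y, y r2 z => x r3 z. *)
Definition all_rel : list rcc5 := [:: DR; EQ; PP; PPI; PO].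

Definition comp (r1 r2 : rcc5) : list rcc5 :=
  match r1, r2 with
  | EQ, r => [:: r]
  | r, EQ => [:: r]
  | DR, DR => all_rel
  | DR, PO => [:: DR; PO; PP]
  | DR, PP => [:: DR; PO; PP]
  | DR, PPI => [:: DR]
  | PO, DR => [:: DR; PO; PPI]
  | PO, PO => all_rel
  | PO, PP => [:: PO; PP]
  | PO, PPI => [:: DR; PO; PPI]
  | PP, DR => [:: DR]
  | PP, PO => [:: DR; PO; PP]
  | PP, PP => [:: PP]
  | PP, PPI => all_rel
  | PPI, DR => [:: DR; PO; PPI]
  | PPI, PO => [:: PO; PPI]
  | PPI, PP => [:: EQ; PO; PP; PPI]
  | PPI, PPI => [:: PPI]
  end.

Definition is_RS5 (F : frame) : Prop :=
  inhabited (carrier F) /\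
  (forall r1 r2 x y, r1 <> r2 -> @frel F r1 x y -> @frel F r2 x y -> False) /\
  (forall x y, exists r, @frel F r x y) /\
  (forall x y, @frel F EQ x y <-> x = y) /\
  (forall x y, @frel F PO x y -> @frel F PO y x) /\
  (forall x y, @frel F DR x y -> @frel F DR y x) /\
  (forall x y, @frel F PP x y <-> @frel F PPI y x) /\
  (forall r1 r2 x y z, @frel F r1 x y -> @frel F r2 y z ->
      exists2 r3, List.In r3 (comp r1 r2) & @frel F r3 x z).

Definition subframe (F : frame) (S : set (carrier F)) : frame :=
  @Frame {x : carrier F | S x}
         (fun r x y => @frel F r (proj1_sig x) (proj1_sig y)).

Definition valid_sub (F : frame) (phi : form) : Prop :=
  forall S : set (carrier F), S !=set0 -> valid (subframe S) phi.

Definition valid_finsub (F : frame) (phi : form) : Prop :=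
  forall S : set (carrier F), S !=set0 -> finite_set S -> valid (subframe S) phi.

Definition regular_closed (T : topologicalType) (s : set T) : Prop :=
  closure (interior s) = s.

Definition treg (T : topologicalType) : Type :=
  {s : set T | regular_closed s /\ s !=set0}.

Definition conc_rel (T : topologicalType) (r : rcc5) (a b : treg T) : Prop :=
  let s := proj1_sig a in
  let t := proj1_sig b in
  match r with
  | EQ => s = t
  | PO => interior s `&` interior t !=set0 /\ ~ (s `<=` t) /\ ~ (t `<=` s)
  | DR => interior s `&` interior t = set0
  | PP => s `<=` t /\ s <> t
  | PPI => t `<=` s /\ s <> t
  end.

Definition conc_frame (T : topologicalType) : frame := @Frame (treg T) (@conc_rel T).

Definition L_RS5 (phi : form) : Prop := forall F, is_RS5 F -> valid F phi.
Definition Lfin_RS5 (phi : form) : Prop := forall F, is_RS5 F -> valid_finsub F phi.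

Definition LS_TOP (phi : form) : Prop :=
  forall T : topologicalType, valid_sub (conc_frame T) phi.
Definition Lfin_TOP (phi : form) : Prop :=
  forall T : topologicalType, valid_finsub (conc_frame T) phi.

Definition LS_Rn (R : realType) (n : nat) (phi : form) : Prop :=
  valid_sub (conc_frame 'rV[R]_n) phi.
Definition Lfin_Rn (R : realType) (n : nat) (phi : form) : Prop :=
  valid_finsub (conc_frame 'rV[R]_n) phi.

(* Main.v *)
Require Import Defs.
From mathcomp Require Import all_boot all_order all_algebra.
From mathcomp Require Import all_classical all_reals all_analysis.
From mathcomp Require Import lra ring.
Import numFieldNormedType.Exports.
Import Order.TTheory GRing.Theory Num.Theory.
Import Defs.
Local Open Scope classical_set_scope.

Definition RS5ax (F : frame) : Prop :=
  (forall r1 r2 x y, r1 <> r2 -> @frel F r1 x y -> @frel F r2 x y -> False) /\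
  (forall x y, exists r, @frel F r x y) /\
  (forall x y, @frel F EQ x y <-> x = y) /\
  (forall x y, @frel F PO x y -> @frel F PO y x) /\
  (forall x y, @frel F DR x y -> @frel F DR y x) /\
  (forall x y, @frel F PP x y <-> @frel F PPI y x) /\
  (forall r1 r2 x y z, @frel F r1 x y -> @frel F r2 y z ->
      exists2 r3, List.In r3 (comp r1 r2) & @frel F r3 x z).

Lemma is_RS5E F : is_RS5 F <-> inhabited (carrier F) /\ RS5ax F.
Proof. by rewrite /is_RS5 /RS5ax; tauto. Qed.

Lemma val_sig_inj (T : Type) (P : T -> Prop) (x y : {z | P z}) :
  proj1_sig x = proj1_sig y -> x = y.
Proof. by move=> h; apply: eq_sig_hprop => // z p q; apply: Prop_irrelevance. Qed.

Lemma sub_RS5ax F (S : set (carrier F)) : RS5ax F -> RS5ax (subframe S).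
Proof.
case=> [h1 [h2 [h3 [h4 [h5 [h6 h7]]]]]]; split; last split; last split; last split;
  last split; last split.
- by move=> r1 r2 [x ?] [y ?] /=; apply: h1.
- by move=> [x ?] [y ?] /=; apply: h2.
- move=> [x px] [y py] /=; rewrite h3; split; [by move=> e; apply: val_sig_inj | by case].
- by move=> [x ?] [y ?] /=; apply: h4.
- by move=> [x ?] [y ?] /=; apply: h5.
- by move=> [x ?] [y ?] /=; apply: h6.
- by move=> r1 r2 [x ?] [y ?] [z ?] /=; apply: h7.
Qed.

Lemma RS5ax_sub_RS5 F (S : set (carrier F)) : RS5ax F -> S !=set0 -> is_RS5 (subframe S).
Proof.
move=> h [x Sx]; apply/is_RS5E; split; first exact: inhabits (exist _ x Sx).
exact: sub_RS5ax.
Qed.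

Definition arel {X} (sub ov : X -> X -> Prop) (r : rcc5) (a b : X) : Prop :=
  match r with
  | EQ => a = b
  | PO => ov a b /\ ~ sub a b /\ ~ sub b a
  | DR => ~ ov a b
  | PP => sub a b /\ a <> b
  | PPI => sub b a /\ a <> b
  end.

Section Arel.
Context {X : Type} (sub ov : X -> X -> Prop)
  (s_refl : forall a, sub a a)
  (s_trans : forall a b c, sub a b -> sub b c -> sub a c)
  (s_anti : forall a b, sub a b -> sub b a -> a = b)
  (o_sym : forall a b, ov a b -> ov b a)
  (o_refl : forall a, ov a a)
  (o_mono : forall a b c, sub a b -> ov c a -> ov c b).

Lemma o_mono2 a b c : sub a b -> ov a c -> ov b c.
Proof. move=> h1 h2; apply: o_sym; exact: (o_mono _ _ _ h1 (o_sym _ _ h2)). Qed.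
Lemma o_sub a b : sub a b -> ov a b.
Proof. move=> h; exact: (o_mono _ _ _ h (o_refl a)). Qed.

Lemma arel_ex a b : exists r, arel sub ov r a b.
Proof.
case: (pselect (ov a b)) => hov; last by exists DR.
case: (pselect (a = b)) => hab; first by exists EQ.
case: (pselect (sub a b)) => hs1; first by exists PP.
case: (pselect (sub b a)) => hs2; first by exists PPI.
by exists PO.
Qed.

Ltac kill :=
  repeat match goal with
  | H : _ /\ _ |- _ => destruct H
  end; subst; try done;
  try (match goal with Hn : ~ ov _ _ |- _ => apply Hn;
     solve [apply o_refl | apply o_sub; assumption | apply o_sym; apply o_sub; assumption] end);
  try (match goal with Hn : ~ sub _ _ |- _ => apply Hn; solve [apply s_refl | assumption] end);
  try (match goal with Hn : _ <> _ |- _ => apply Hn; solve [reflexivity | apply s_anti; assumption] end).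

Lemma arel_disj r1 r2 a b : r1 <> r2 -> arel sub ov r1 a b -> arel sub ov r2 a b -> False.
Proof.
case: r1; case: r2 => //= _ h1 h2; kill.
Qed.

Ltac kill2 :=
  repeat match goal with
  | H : _ /\ _ |- _ => destruct H
  end; subst; try done;
  try (match goal with Hn : ~ ov _ _ |- _ => apply Hn;
     solve [eauto 4 using o_mono, o_mono2, o_sub] end);
  try (match goal with Hn : ~ sub _ _ |- _ => apply Hn; solve [eauto 3] end);
  try (match goal with Hn : _ <> _ |- _ => apply Hn; solve [reflexivity | apply s_anti; eauto 3] end).

Lemma arel_comp r1 r2 a b c : arel sub ov r1 a b -> arel sub ov r2 b c ->
  exists2 r3, List.In r3 (Defs.comp r1 r2) & arel sub ov r3 a c.
Proof.
move=> h1 h2; have [r3 h3] := arel_ex a c; exists r3 => //.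
case: r1 h1; case: r2 h2; case: r3 h3 => /= h3 h2 h1; try tauto; exfalso; kill2.
Qed.

End Arel.

Lemma arel_RS5ax F (sub ov : carrier F -> carrier F -> Prop)
  (s_refl : forall a, sub a a)
  (s_trans : forall a b c, sub a b -> sub b c -> sub a c)
  (s_anti : forall a b, sub a b -> sub b a -> a = b)
  (o_sym : forall a b, ov a b -> ov b a)
  (o_refl : forall a, ov a a)
  (o_mono : forall a b c, sub a b -> ov c a -> ov c b) :
  (forall r x y, @frel F r x y <-> arel sub ov r x y) -> RS5ax F.
Proof.
move=> hF; split; last split; last split; last split; last split; last split.
- move=> r1 r2 x y ne; rewrite !hF; exact: (arel_disj sub ov s_refl s_anti o_sym o_refl o_mono _ _ _ _ ne).
- by move=> x y; have [r h] := arel_ex sub ov x y; exists r; rewrite hF.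
- by move=> x y; rewrite hF.
- by move=> x y; rewrite !hF /= => -[h1 [h2 h3]]; split => //; exact: o_sym.
- by move=> x y; rewrite !hF /= => h1 h2; apply: h1; exact: o_sym.
- by move=> x y; rewrite !hF /=; split => -[h1 h2]; split => // e; apply: h2.
- move=> r1 r2 x y z; rewrite !hF => h1 h2.
  have [r3 i3 h3] := arel_comp sub ov s_refl s_trans s_anti o_sym o_refl o_mono _ _ _ _ _ h1 h2.
  by exists r3 => //; rewrite hF.
Qed.


Section Conc.
Context (T : topologicalType).
Definition csub (a b : treg T) := proj1_sig a `<=` proj1_sig b.
Definition cov (a b : treg T) := (proj1_sig a)° `&` (proj1_sig b)° !=set0.

Lemma set0_iff (U : Type) (A : set U) : A = set0 <-> ~ (A !=set0).
Proof.
split; first by move=> -> [x].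
move=> h; apply/seteqP; split => x // Ax; apply: h; by exists x.
Qed.

Lemma treg_eq (a b : treg T) : proj1_sig a = proj1_sig b <-> a = b.
Proof. by split; [exact: val_sig_inj | move=> ->]. Qed.

Lemma conc_arel r a b : @conc_rel T r a b <-> arel csub cov r a b.
Proof.
case: r => /=.
- exact: set0_iff.
- exact: treg_eq.
- by rewrite /csub; split => -[h1 h2]; split => // e; apply: h2; [rewrite e | apply/treg_eq].
- by rewrite /csub; split => -[h1 h2]; split => // e; apply: h2; [rewrite e | apply/treg_eq].
- by [].
Qed.

Lemma treg_int_ne (a : treg T) : (proj1_sig a)° !=set0.
Proof.
case: a => s [rs [x sx]] /=; apply/set0P/negP => /eqP h.
by move: sx; rewrite -rs h closure0.
Qed.

Lemma conc_RS5ax : RS5ax (conc_frame T).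
Proof.
apply: (@arel_RS5ax (conc_frame T) csub cov); rewrite /csub /cov /=.
- by move=> a x.
- by move=> a b c h1 h2; apply: subset_trans h2.
- by move=> a b h1 h2; apply/treg_eq/seteqP.
- by move=> a b; rewrite setIC.
- by move=> a; rewrite setIid; exact: treg_int_ne.
- move=> a b c h [x [h1 h2]]; exists x; split => //; exact: interiorS h _ h2.
- move=> r x y; exact: conc_arel.
Qed.
End Conc.
Arguments csub {T}.
Arguments cov {T}.
Arguments conc_arel {T}.
Arguments treg_eq {T}.
Arguments treg_int_ne {T}.


Section FArel.
Context (F : frame) (hF : RS5ax F).
Notation W := (carrier F).
Notation fr := (@Defs.frel F).

Definition le (x y : W) := x = y \/ fr PP x y.
Definition ndr (x y : W) := ~ fr DR x y.

Lemma hdisj r1 r2 x y : r1 <> r2 -> fr r1 x y -> fr r2 x y -> False.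
Proof. by case: hF => h _; apply: h. Qed.
Lemma hex x y : exists r, fr r x y.
Proof. by case: hF => _ [h _]; apply: h. Qed.
Lemma heq x y : fr EQ x y <-> x = y.
Proof. by case: hF => _ [_ [h _]]; apply: h. Qed.
Lemma hpo x y : fr PO x y -> fr PO y x.
Proof. by case: hF => _ [_ [_ [h _]]]; apply: h. Qed.
Lemma hdr x y : fr DR x y -> fr DR y x.
Proof. by case: hF => _ [_ [_ [_ [h _]]]]; apply: h. Qed.
Lemma hpp x y : fr PP x y <-> fr PPI y x.
Proof. by case: hF => _ [_ [_ [_ [_ [h _]]]]]; apply: h. Qed.
Lemma hcomp r1 r2 x y z : fr r1 x y -> fr r2 y z ->
      exists2 r3, List.In r3 (Defs.comp r1 r2) & fr r3 x z.
Proof. by case: hF => _ [_ [_ [_ [_ [_ h]]]]]; apply: h. Qed.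

Arguments hcomp {r1 r2 x y z}.
Lemma heqxx x : fr EQ x x.
Proof. by apply/heq. Qed.

Lemma pp_irr x : ~ fr PP x x.
Proof. move=> h; exact: (hdisj PP EQ _ _ ltac:(done)) h (heqxx x). Qed.

Lemma pp_trans x y z : fr PP x y -> fr PP y z -> fr PP x z.
Proof. move=> h1 h2; have [r3 /= [<-|//] //] := hcomp h1 h2. Qed.

Arguments pp_trans {x y z}.
Lemma le_refl x : le x x.
Proof. by left. Qed.

Lemma le_trans x y z : le x y -> le y z -> le x z.
Proof.
case=> [<-|h1] // [<-|h2]; first by right.
by right; exact: pp_trans h1 h2.
Qed.

Lemma le_anti x y : le x y -> le y x -> x = y.
Proof.
case=> [//|h1] [//|h2]; exfalso; exact: pp_irr (pp_trans h1 h2).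
Qed.

Lemma le_notDR a y : le a y -> ~ fr DR a y.
Proof.
case=> [<-|h] hd; first exact: (hdisj DR EQ _ _ ltac:(done)) hd (heqxx a).
exact: (hdisj DR PP _ _ ltac:(done)) hd h.
Qed.

Lemma le_DR a x y : le a x -> fr DR x y -> fr DR a y.
Proof.
case=> [->//|h1] h2; have [r3 /= [<-|//] //] := hcomp h1 h2.
Qed.

Lemma F_arel r x y : fr r x y <-> arel le ndr r x y.
Proof.
case: r => /=.
- rewrite /ndr; split; first by move=> h nh; apply: nh.
  by move=> h; case: (pselect (fr DR x y)) => // h'; exfalso; apply: h.
- exact: heq.
- split; first by move=> h; split; [right | move=> e; subst; exact: pp_irr h].
  by case=> -[e|h] ne.
- rewrite -hpp; split; first by move=> h; split; [right | move=> e; subst; exact: pp_irr h].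
  by case=> -[e|h] ne //; exfalso; apply: ne.
- split.
  + move=> h; split; [|split].
    * by move=> hd; exact: (hdisj PO DR _ _ ltac:(done)) h hd.
    * case=> [e|hp]; first by subst; exact: (hdisj PO EQ _ _ ltac:(done)) h (heqxx _).
      exact: (hdisj PO PP _ _ ltac:(done)) h hp.
    * case=> [e|hp]; first by subst; exact: (hdisj PO EQ _ _ ltac:(done)) h (heqxx _).
      by move/hpp: hp; exact: (hdisj PO PPI _ _ ltac:(done)) h.
  + case=> h1 [h2 h3]; have [r hr] := hex x y.
    case: r hr => hr //.
    * by exfalso; apply: h2; left; apply/heq.
    * by exfalso; apply: h2; right.
    * by exfalso; apply: h3; right; apply/hpp.
Qed.
End FArel.
Arguments hdisj {F}.
Arguments hex {F}.
Arguments heq {F}.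
Arguments hpo {F}.
Arguments hdr {F}.
Arguments hpp {F}.
Arguments hcomp {F}.
Arguments heqxx {F}.
Arguments pp_irr {F}.
Arguments pp_trans {F}.
Arguments le_trans {F}.
Arguments le_anti {F}.
Arguments le_notDR {F}.
Arguments le_DR {F}.
Arguments F_arel {F}.


Section Topo.
Context {T : topologicalType} {I : Type} (O : I -> set T)
  (Oopen : forall i, open (O i)) (One : forall i, O i !=set0)
  (Odisj : forall i j x, O i x -> O j x -> i = j).

Definition UP (P : I -> Prop) := \bigcup_(i in P) O i.
Definition AP (P : I -> Prop) := closure (UP P).

Lemma UP_open P : open (UP P).
Proof. by apply: bigcup_open => i _; exact: Oopen. Qed.

Lemma AP_reg P : regular_closed (AP P).
Proof. exact: closure_open_regclosed (UP_open P). Qed.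

Lemma AP_ne P i : P i -> AP P !=set0.
Proof.
move=> Pi; case: (One i) => p Op; exists p; apply: subset_closure; by exists i.
Qed.

Lemma O_AP P i : P i -> O i `<=` (AP P)°.
Proof.
move=> Pi; rewrite -open_subsetE //; move=> p Op; apply: subset_closure; by exists i.
Qed.

Lemma AP_sub P Q : AP P `<=` AP Q -> forall i, P i -> Q i.
Proof.
move=> sPQ i Pi; case: (One i) => p Op.
have : AP Q p by apply: sPQ; apply: subset_closure; exists i.
move/(_ (O i)) => /(_ (open_nbhs_nbhs (conj (Oopen i) Op))) [y [[j Qj Ojy] Oiy]].
by rewrite (Odisj _ _ _ Oiy Ojy).
Qed.

Lemma sub_AP P Q : (forall i, P i -> Q i) -> AP P `<=` AP Q.
Proof. by move=> h; apply: closureS => x [i Pi Oi]; exists i => //; apply: h. Qed.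

Lemma AP_ov P Q : (AP P)° `&` (AP Q)° !=set0 <-> exists i, P i /\ Q i.
Proof.
split.
  case=> x [xP xQ].
  have oW : open ((AP P)° `&` (AP Q)°) by apply: openI; exact: open_interior.
  have := interior_subset xP _ (open_nbhs_nbhs (conj oW (conj xP xQ))).
  case=> y [[i Pi Oiy] [yP yQ]].
  have oW2 : open (O i `&` ((AP P)° `&` (AP Q)°)) by apply: openI.
  have := interior_subset yQ _ (open_nbhs_nbhs (conj oW2 (conj Oiy (conj yP yQ)))).
  case=> z [[j Qj Ojz] [Oiz _]].
  exists i; split => //; by rewrite (Odisj _ _ _ Oiz Ojz).
case=> i [Pi Qi]; case: (One i) => p Op; exists p; split.
  exact: O_AP Pi _ Op.
exact: O_AP Qi _ Op.
Qed.
End Topo.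

Section RnSec.
Local Open Scope ring_scope.
Definition Ok (R : realType) n (k : nat) : set 'rV[R]_n.+1 :=
  ball (const_mx (k%:R : R) : 'rV[R]_n.+1) (4^-1).

Lemma Ok_open R n k : open (@Ok R n k).
Proof. apply: ball_open; rewrite invr_gt0; lra. Qed.

Lemma Ok_ne R n k : @Ok R n k !=set0.
Proof. exists (const_mx (k%:R : R)); apply: ballxx; rewrite invr_gt0; lra. Qed.

Lemma Ok_disj R n i j x : @Ok R n i x -> @Ok R n j x -> i = j.
Proof.
rewrite /Ok => -[_ /(_ ord0 ord0)] hi [_ /(_ ord0 ord0)] hj.
move: hi hj; rewrite !mxE /ball /= => hi hj.
have : `|i%:R - j%:R : R| < 1.
  rewrite (_ : i%:R - j%:R = (i%:R - x ord0 ord0) - (j%:R - x ord0 ord0)); last by ring.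
  apply: le_lt_trans (ler_normB _ _) _.
  have : (4^-1 : R) + 4^-1 < 1 by lra.
  by apply: le_lt_trans; apply: lerD; apply: ltW.
move=> h; case: (ltngtP i j) => hij //.
  move: h; rewrite distrC -natrB; last exact: ltnW.
  rewrite normr_nat ltrn1 => h; exfalso; move: h; rewrite ltnS leqn0 subn_eq0 leqNgt hij //.
move: h; rewrite -natrB; last exact: ltnW.
rewrite normr_nat ltrn1 => h; exfalso; move: h; rewrite ltnS leqn0 subn_eq0 leqNgt hij //.
Qed.

End RnSec.

Lemma arel_morph {X Y : Type} (e : X -> Y) (sub ov : Y -> Y -> Prop) (sub' ov' : X -> X -> Prop)
  (hs : forall x y, sub (e x) (e y) <-> sub' x y)
  (ho : forall x y, ov (e x) (e y) <-> ov' x y)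
  (he : forall x y, e x = e y <-> x = y) r x y :
  arel sub ov r (e x) (e y) <-> arel sub' ov' r x y.
Proof. by case: r => /=; rewrite ?hs ?ho ?he ?hs. Qed.

Section Emb.
Context (R : realType) (m : nat) (F : frame) (hF : RS5ax F) (c : carrier F -> nat)
  (cinj : injective c).
Notation W := (carrier F).
Notation fr := (@Defs.frel F).
Definition II := (W + W * W)%type.
Definition idx (u : II) : nat :=
  pickle (match u with inl x => inl (c x) | inr (x, y) => inr (c x, c y) end : nat + nat * nat).
Lemma idx_inj : injective idx.
Proof.
move=> [x|[x1 x2]] [y|[y1 y2]] /(pcan_inj pickleK_inv) //=; first by case=> /cinj ->.
by case=> /cinj -> /cinj ->.
Qed.
Definition OO (u : II) : set 'rV[R]_m.+1 := Ok R m (idx u).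
Lemma OO_disj i j x : OO i x -> OO j x -> i = j.
Proof. by move=> h1 h2; apply: idx_inj; exact: Ok_disj h1 h2. Qed.

Definition memb (x : W) (u : II) : Prop :=
  match u with
  | inl z => @le F z x
  | inr (u1, u2) => fr PO u1 u2 /\ (@le F u1 x \/ @le F u2 x)
  end.

Lemma OO_open u : open (OO u). Proof. exact: Ok_open. Qed.
Lemma OO_ne u : OO u !=set0. Proof. exact: Ok_ne. Qed.

Definition emb (x : W) : treg 'rV[R]_m.+1 :=
  exist _ (AP OO (memb x))
    (conj (AP_reg OO OO_open (memb x)) (@AP_ne _ _ OO OO_ne (memb x) (inl x) (@le_refl F x))).

Lemma memb_le x y : (forall u, memb x u -> memb y u) <-> le F x y.
Proof.
split; first by move=> /(_ (inl x) (@le_refl F x)).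
move=> hxy [z|[u1 u2]]; rewrite /memb; first by move=> h; exact: (le_trans hF _ _ _ h hxy).
case=> hpo [h|h]; split => //; [left|right]; exact: (le_trans hF _ _ _ h hxy).
Qed.

Lemma memb_ov x y : (exists u, memb x u /\ memb y u) <-> ndr F x y.
Proof.
split.
  case=> -[z|[u1 u2]]; rewrite /memb => -[hx hy] hd.
    exact: (le_notDR hF _ _ hy (le_DR hF _ _ _ hx hd)).
  case: hx => hpo hx; case: hy => _ hy.
  case: hx => hx; case: hy => hy.
  - exact: (le_notDR hF _ _ hy (le_DR hF _ _ _ hx hd)).
  - have h1 := hdr hF _ _ (le_DR hF _ _ _ hx hd).
    have h2 := hdr hF _ _ (le_DR hF _ _ _ hy h1).
    exact: (hdisj hF PO DR _ _ ltac:(done)) hpo h2.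
  - have h1 := hdr hF _ _ (le_DR hF _ _ _ hx hd).
    have h2 := le_DR hF _ _ _ hy h1.
    exact: (hdisj hF PO DR _ _ ltac:(done)) hpo h2.
  - exact: (le_notDR hF _ _ hy (le_DR hF _ _ _ hx hd)).
move=> hn; have [r hr] := hex hF x y.
case: r hr => hr.
- by case: (hn hr).
- by exists (inl x); split; [exact: (@le_refl F) | left; apply/(heq hF)].
- by exists (inl x); split; [exact: (@le_refl F) | right].
- by exists (inl y); split; [right; apply/(hpp hF) | exact: (@le_refl F)].
- by exists (inr (x, y)); split; split => //; [left | right]; exact: (@le_refl F).
Qed.

Lemma emb_sub x y : csub (emb x) (emb y) <-> le F x y.
Proof.
rewrite -memb_le /csub /=; split.
  exact: AP_sub OO OO_open OO_ne OO_disj _ _.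
exact: sub_AP.
Qed.

Lemma emb_ov x y : cov (emb x) (emb y) <-> ndr F x y.
Proof. rewrite -memb_ov /cov /=; exact: AP_ov OO OO_open OO_ne OO_disj _ _. Qed.

Lemma emb_eq x y : emb x = emb y <-> x = y.
Proof.
split; last by move=> ->.
move=> e; apply: (le_anti hF); apply/emb_sub; rewrite e; by move=> p.
Qed.

Lemma emb_rel r x y : @conc_rel _ r (emb x) (emb y) <-> fr r x y.
Proof.
rewrite conc_arel (F_arel hF).
exact: arel_morph emb_sub emb_ov emb_eq r x y.
Qed.
End Emb.

Lemma sat_transfer (F G : frame) (h : carrier F -> carrier G)
  (hs : forall y, exists x, h x = y) (hi : injective h)
  (hr : forall r x y, @Defs.frel G r (h x) (h y) <-> @Defs.frel F r x y)
  (V : nat -> carrier F -> Prop) :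
  forall phi x, @sat G (fun p y => forall x, h x = y -> V p x) (h x) phi <-> @sat F V x phi.
Proof.
elim=> [p|a IH|a IHa b IHb|r a IH] x /=.
- by split; [move/(_ x erefl) | move=> Vx x' /hi ->].
- by rewrite IH.
- by rewrite IHa IHb.
- split.
  + move=> H v rv; apply/IH; apply: H; exact/hr.
  + move=> H v'; have [v <-] := hs v'; move=> /hr rv; apply/IH; exact: H.
Qed.

Lemma valid_transfer (F G : frame) (h : carrier F -> carrier G)
  (hs : forall y, exists x, h x = y) (hi : injective h)
  (hr : forall r x y, @Defs.frel G r (h x) (h y) <-> @Defs.frel F r x y) phi :
  valid G phi -> valid F phi.
Proof. by move=> H V x; apply/(sat_transfer _ _ _ hs hi hr V phi x); apply: H. Qed.

Definition rc (r : rcc5) : nat :=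
  match r with DR => 0 | EQ => 1 | PP => 2 | PPI => 3 | PO => 4 end.
Lemma rc_inj : injective rc. Proof. by case; case. Qed.

Fixpoint enc (f : form) : GenTree.tree nat :=
  match f with
  | Var p => GenTree.Leaf p
  | Neg a => GenTree.Node 0 [:: enc a]
  | And a b => GenTree.Node 1 [:: enc a; enc b]
  | Box r a => GenTree.Node (rc r).+2 [:: enc a]
  end.

Lemma enc_inj : injective enc.
Proof.
elim=> [p|a IH|a IHa b IHb|r a IH] [q|c|c1 c2|s c] //= h; injection h => //.
- by move=> ->.
- by move=> /IH ->.
- by move=> /IHb -> /IHa ->.
- by move=> /IH -> /rc_inj ->.
Qed.

Definition code (l : seq (rcc5 * form)) : nat :=
  pickle [seq (rc p.1, enc p.2) | p <- l].
Lemma code_inj : injective code.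
Proof.
move=> l1 l2 /(pcan_inj pickleK_inv) /inj_map; apply.
by move=> [r1 f1] [r2 f2] [/rc_inj -> /enc_inj ->].
Qed.

Section Wit.
Context (F : frame) (V : nat -> carrier F -> Prop) (w : carrier F).
Notation W := (carrier F).
Notation fr := (@Defs.frel F).

Lemma wit_ex (v : W) (r : rcc5) (psi : form) :
  {u : W | (exists u, fr r v u /\ ~ sat V u psi) -> fr r v u /\ ~ sat V u psi}.
Proof.
case: (pselect (exists u, fr r v u /\ ~ sat V u psi)) => h.
  by case: (cid h) => u hu; exists u.
by exists v.
Qed.

Fixpoint gw (l : seq (rcc5 * form)) : W :=
  match l with
  | [::] => w
  | (r, psi) :: l' => proj1_sig (wit_ex (gw l') r psi)
  end.

Definition SW : set W := [set y | exists l, gw l = y].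

Lemma sat_SW psi (x : {y | SW y}) :
  @sat (subframe SW) (fun p x => V p (proj1_sig x)) x psi <-> sat V (proj1_sig x) psi.
Proof.
elim: psi x => [p|a IH|a IHa b IHb|r a IH] x /=.
- by [].
- by rewrite IH.
- by rewrite IHa IHb.
- split.
  + move=> H; apply: contrapT => hn.
    have [v [rv nv]] : exists v, fr r (proj1_sig x) v /\ ~ sat V v a.
      apply: contrapT => hn2; apply: hn => v rv; apply: contrapT => nv.
      by apply: hn2; exists v.
    case: x H hn rv => x [l gl] H hn rv /=.
    have [h1 h2] := proj2_sig (wit_ex (gw l) r a) (ex_intro _ v (conj (eq_ind_r (fun z => fr r z v) rv gl) nv)).
    have Sz : SW (gw ((r, a) :: l)) by exists ((r, a) :: l).
    apply: h2; have := H (exist _ _ Sz); rewrite /= -gl => /(_ h1).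
    by move/IH.
  + move=> H v rv; apply/IH; exact: H.
Qed.

Definition cW (x : {y | SW y}) : nat := code (proj1_sig (cid (proj2_sig x))).
Lemma cW_inj : injective cW.
Proof.
move=> x y /code_inj; case: (cid (proj2_sig x)) => l hl; case: (cid (proj2_sig y)) => l' hl' /= e.
by apply: val_sig_inj; rewrite -hl -hl' e.
Qed.
End Wit.

Lemma emb_valid (R : realType) (m : nat) (F : frame) (hF : RS5ax F) (c : carrier F -> nat) (cinj : injective c) (phi : form) :
  valid (@subframe (conc_frame 'rV[R]_m.+1) [set y | exists x, emb R m F c x = y]) phi ->
  valid F phi.
Proof.
move=> H.
pose S : set (carrier (conc_frame 'rV[R]_m.+1)) := [set y | exists x, emb R m F c x = y].
have hS : forall x, S (emb R m F c x) by move=> x; exists x.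
pose h (x : carrier F) : carrier (@subframe (conc_frame _) S) := exist _ (emb R m F c x) (hS x).
apply: (@valid_transfer F (subframe S) h _ _ _ phi H).
- by case=> y [x ex]; exists x; apply: val_sig_inj => /=; rewrite ex.
- by move=> x y /(f_equal (@proj1_sig _ _)) /= /(emb_eq R m F hF c cinj).
- by move=> r x y /=; exact: emb_rel.
Qed.

Lemma partI (R : realType) (m : nat) (phi : form) : LS_Rn R m.+1 phi -> L_RS5 phi.
Proof.
move=> Hv F /is_RS5E [_ hF] V w; apply: contrapT => hn.
have hF' := @sub_RS5ax F (SW F V w) hF.
have w0 : SW F V w w by exists [::].
have ne : [set y | exists x, emb R m (subframe (SW F V w)) (cW F V w) x = y] !=set0.
  by exists (emb R m (subframe (SW F V w)) (cW F V w) (exist _ w w0)); exists (exist _ w w0).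
have Hval := emb_valid R m _ hF' _ (@cW_inj F V w) phi (Hv _ ne).
apply: hn; have := Hval (fun p x => V p (proj1_sig x)) (exist _ w w0).
by move/sat_SW.
Qed.

Lemma partII (R : realType) (m : nat) (phi : form) : Lfin_Rn R m.+1 phi -> Lfin_RS5 phi.
Proof.
move=> Hv F /is_RS5E [_ hF] S [x0 Sx0] Sfin.
have hF' := @sub_RS5ax F S hF.
have /pcard_injP [f finj] := finite_set_countable Sfin.
pose c (x : {y | S y}) := f (proj1_sig x).
have cinj : injective c.
  move=> [x Sx] [y Sy]; rewrite /c /= => e; apply: val_sig_inj => /=.
  by apply: finj => //; exact: mem_set.
apply: (emb_valid R m _ hF' c cinj phi).
apply: Hv.
  exists (emb R m (subframe S) c (exist _ x0 Sx0)); by exists (exist _ x0 Sx0).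
pose e' := fun z => match pselect (S z) with
  | left h => emb R m (subframe S) c (exist _ z h)
  | right _ => emb R m (subframe S) c (exist _ x0 Sx0) end.
have -> : [set y | exists x, emb R m (subframe S) c x = y] = e' @` S.
  apply/seteqP; split => y.
    case=> -[z Sz] <-; exists z => //; rewrite /e'; case: pselect => h //.
    by rewrite (Prop_irrelevance h Sz).
  case=> z Sz <-; rewrite /e'; case: pselect => h //; by exists (exist _ z h).
exact: finite_image.
Qed.

Theorem theorem8p2 (R : realType) (n : nat) (hn : (0 < n)%N) :
  ((forall phi, L_RS5 phi <-> LS_TOP phi) /\
   (forall phi, LS_TOP phi <-> LS_Rn R n phi)) /\
  ((forall phi, Lfin_RS5 phi <-> Lfin_TOP phi) /\
   (forall phi, Lfin_TOP phi <-> Lfin_Rn R n phi)).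
Proof.
case: n hn => // m _.
have A1 : forall phi, L_RS5 phi -> LS_TOP phi.
  move=> phi H T S S0; apply: H; exact: RS5ax_sub_RS5 (conc_RS5ax T) S0.
have A2 : forall phi, Lfin_RS5 phi -> Lfin_TOP phi.
  move=> phi H T S [x Sx] Sfin; apply: (H (conc_frame T)) => //; last by exists x.
  by apply/is_RS5E; split; [exact: inhabits x | exact: conc_RS5ax].
split; split => phi; split.
- exact: A1.
- by move=> H; apply: (@partI R m); apply: H.
- by move=> H; apply: H.
- by move=> H; apply: A1; exact: (@partI R m).
- exact: A2.
- by move=> H; apply: (@partII R m); apply: H.
- by move=> H; apply: H.
- by move=> H; apply: A2; exact: (@partII R m).
Qed.
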